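(* Let $D$ be an integer which is not a perfect square, let $p\neq 2$ be a prime with $p\mid D$ and $p^2\nmid D$, and let $l\geq 1$. Let $A,B\in\mathbb{Z}$ be such that $p^{l+1}$ divides none of $A$, $B$, $A-B$, $G(A,B)$. Then $S^{(D;A,B)}(\mathbb{Q}_p)\neq\emptyset$ if and only if the pair $(A \bmod p^{8l+1}, B \bmod p^{8l+1})$ lies in $\mathcal{R}_l(p)$.
   Context: $S^{(D;A,B)}\subset\mathbb{P}^4_{\mathbb{Q}}$ is defined by $Q_1(\mathbf{t})=Q_2(\mathbf{t})=0$ where $Q_1(\mathbf{t})=t_2^2-Dt_3^2-t_0t_1$ and $Q_2(\mathbf{t})=t_2^2-Dt_4^2-(t_0+At_1)(t_0+Bt_1)$. $G(A,B)=A^2-2AB+B^2-2A-2B+1$. For a prime $p$ and $l\geq 1$, $\mathcal{R}_l(p)$ is the set of pairs of residue classes $(A,B)$ modulo $p^{8l+1}$ such that $p^{l+1}$ divides none of $A,B,A-B,G(A,B)$ and the congruences $Q_1(\mathbf{t})\equiv Q_2(\mathbf{t})\equiv 0\pmod{p^{8l+1}}$ have a solution $\mathbf{t}\in(\mathbb{Z}/p^{8l+1}\mathbb{Z})^5$ whose components are not all divisible by $p$. *)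

(* Defs.v *)
From HB Require Import structures.
From mathcomp Require Import all_boot all_order all_algebra.
Set Implicit Arguments. Unset Strict Implicit. Unset Printing Implicit Defensive.
Import Order.TTheory GRing.Theory Num.Theory.
Local Open Scope ring_scope.

(* The two quadrics defining S^(D;A,B) in P^4, evaluated on t : 'I_5 -> R
   (t 0 = t_0, ..., t 4 = t_4), over any commutative ring R. *)
Definition Q1 {R : comRingType} (D : R) (t : 'I_5 -> R) : R :=
  t (inord 2) ^+ 2 - D * t (inord 3) ^+ 2 - t (inord 0) * t (inord 1).
Definition Q2 {R : comRingType} (D A B : R) (t : 'I_5 -> R) : R :=
  t (inord 2) ^+ 2 - D * t (inord 4) ^+ 2
  - (t (inord 0) + A * t (inord 1)) * (t (inord 0) + B * t (inord 1)).

Definition Gpoly (A B : int) : int :=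
  A ^+ 2 - 2 * A * B + B ^+ 2 - 2 * A - 2 * B + 1.

(* p-adic integers Z_p as the inverse limit of Z/p^k Z: coherent sequences
   of integer representatives x k of residues modulo p^k. *)
Definition padic_coherent (p : nat) (x : nat -> int) : Prop :=
  forall k : nat, (x k.+1 == x k %[mod (p ^ k)%:Z])%Z.

Definition padic_eq (p : nat) (x y : nat -> int) : Prop :=
  forall k : nat, (x k == y k %[mod (p ^ k)%:Z])%Z.

(* S^(D;A,B)(Q_p) is nonempty: there is a nonzero vector t in Q_p^5 with
   Q1(t) = Q2(t) = 0.  After clearing denominators (homogeneity) this is the
   same as a nonzero vector in Z_p^5; Z_p is modelled as coherent sequences,
   and ring operations are computed componentwise on representatives. *)
Definition S_has_Qp_point (p : nat) (D A B : int) : Prop :=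
  exists t : 'I_5 -> nat -> int,
    [/\ forall i, padic_coherent p (t i),
        exists i, ~ padic_eq p (t i) (fun _ => 0),
        padic_eq p (fun k => Q1 D (fun i => t i k)) (fun _ => 0)
      & padic_eq p (fun k => Q2 D A B (fun i => t i k)) (fun _ => 0)].

(* Membership of the pair of residue classes (A mod p^(8l+1), B mod p^(8l+1))
   in R_l(p), given by representatives A B; the condition only depends on
   the classes since l+1 <= 8l+1. *)
Definition in_Rl (D : int) (p l : nat) (A B : int) : Prop :=
  let M := (p ^ (8 * l + 1))%:Z in
  let q := (p ^ l.+1)%:Z in
  [/\ ~~ (q %| A)%Z, ~~ (q %| B)%Z, ~~ (q %| A - B)%Z, ~~ (q %| Gpoly A B)%Z
    & exists t : 'I_5 -> int,
        [/\ (M %| Q1 D t)%Z, (M %| Q2 D A B t)%Z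
          & exists i, ~~ (p%:Z %| t i)%Z]].

(* Main.v *)
Require Import Defs.
From mathcomp Require Import all_boot all_order all_algebra.
From mathcomp Require Import ring zify.
From Stdlib Require Import Classical.
Import GRing.Theory Num.Theory.
Set Implicit Arguments. Unset Strict Implicit.
Local Open Scope ring_scope.

Definition PP (p k : nat) : int := (p ^ k)%:Z.
Definition vz (p : nat) (x : int) : nat := logn p `|x|.

Lemma PPS p k : PP p k.+1 = p%:Z * PP p k.
Proof. by rewrite /PP expnS PoszM. Qed.

Lemma PPD p j k : PP p (j + k) = PP p j * PP p k.
Proof. by rewrite /PP expnD PoszM. Qed.

Lemma PP1 p : PP p 1 = p%:Z. Proof. by rewrite /PP expn1. Qed.
Lemma PP0 p : PP p 0 = 1. Proof. by []. Qed.

Lemma dvdP_vz p k x : prime p -> x != 0 -> (PP p k %| x)%Z = (k <= vz p x)%N.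
Proof.
move=> pp x0; rewrite dvdzE /PP absz_nat pfactor_dvdn //.
by rewrite absz_gt0.
Qed.

Lemma vzM p x y : x != 0 -> y != 0 -> vz p (x * y) = (vz p x + vz p y)%N.
Proof. by move=> x0 y0; rewrite /vz abszM lognM // absz_gt0. Qed.

Lemma dvdP_le p j k x : (j <= k)%N -> (PP p k %| x)%Z -> (PP p j %| x)%Z.
Proof.
move=> jk; apply: dvdz_trans; rewrite /PP dvdzE !absz_nat.
exact: dvdn_exp2l.
Qed.

Lemma PP_neq0 p k : prime p -> PP p k != 0.
Proof. by move=> pp; rewrite /PP eqz_nat expn_eq0 negb_and -lt0n prime_gt0. Qed.

Lemma vz_lt p k x : prime p -> x != 0 -> ~~ (PP p k %| x)%Z -> (vz p x < k)%N.
Proof. by move=> pp x0; rewrite dvdP_vz // -ltnNge. Qed.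

Lemma vz_ge p k x : prime p -> x != 0 -> (PP p k %| x)%Z -> (k <= vz p x)%N.
Proof. by move=> pp x0; rewrite dvdP_vz. Qed.

Lemma dvd0_neq p k x : prime p -> ~~ (PP p k %| x)%Z -> x != 0.
Proof. by move=> pp; apply: contraNneq => ->; rewrite dvdz0. Qed.

Lemma vz_add p k x y z : prime p -> x = y + z -> (PP p k %| z)%Z -> y != 0 ->
  (vz p y < k)%N -> x != 0 /\ vz p x = vz p y.
Proof.
move=> pp -> zk y0 vy.
have hy : (PP p (vz p y) %| y)%Z by rewrite dvdP_vz.
have hy1 : ~~ (PP p (vz p y).+1 %| y)%Z by rewrite dvdP_vz // ltnn.
have zy : (PP p (vz p y).+1 %| z)%Z by apply: dvdP_le zk.
have nx : ~~ (PP p (vz p y).+1 %| y + z)%Z.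
  by apply: contra hy1 => h; rewrite -[X in (_ %| X)%Z](addrK z y); apply: rpredB.
have x0 : y + z != 0 by apply: contraNneq nx => ->; rewrite dvdz0.
split => //.
have zy' : (PP p (vz p y) %| z)%Z by apply: dvdP_le zy.
have h1 : (vz p y <= vz p (y + z))%N by rewrite -dvdP_vz // rpredD.
have h2 : (vz p (y + z) < (vz p y).+1)%N by apply: vz_lt.
lia.
Qed.

Lemma dvdp_eq0 p x : prime p -> ~~ (p%:Z %| x)%Z -> x != 0.
Proof. by move=> pp; apply: contraNneq => ->; rewrite dvdz0. Qed.

Lemma vz0 p x : prime p -> ~~ (p%:Z %| x)%Z -> vz p x = 0%N.
Proof.
move=> pp h; have x0 := dvdp_eq0 pp h.
have := @vz_lt p 1 x pp x0; rewrite PP1 => /(_ h); lia.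
Qed.

Lemma EuclidP p x y : prime p -> (p%:Z %| x * y)%Z -> (p%:Z %| x)%Z \/ (p%:Z %| y)%Z.
Proof.
move=> pp; rewrite !dvdzE abszM absz_nat Euclid_dvdM //.
by case/orP; [left|right].
Qed.

Lemma cancelP p k x y : prime p -> (PP p k %| x * y)%Z -> ~~ (p%:Z %| y)%Z ->
  (PP p k %| x)%Z.
Proof.
move=> pp h ny; have y0 := dvdp_eq0 pp ny.
have [->|x0] := eqVneq x 0; first by rewrite dvdz0.
move: h; rewrite !dvdP_vz ?mulf_neq0 // vzM // (vz0 pp ny) addn0.
by [].
Qed.

Ltac clia := repeat match goal with
  | H : is_true (_ %| _)%Z |- _ => clear H
  | H : is_true (~~ _) |- _ => clear H
  | H : is_true (_ && _) |- _ => clear H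
  | H : is_true (prime _) |- _ => clear H
  | H : @eq int _ _ |- _ => clear H
  | H : forall _, _ |- _ => clear H
  | H : exists _, _ |- _ => clear H
  | H : ~ _ |- _ => clear H
  end; lia.


Lemma dvdlin (d a b x y : int) : (d %| a)%Z -> (d %| b)%Z -> (d %| x * a + y * b)%Z.
Proof. by move=> ha hb; apply: rpredD; apply: dvdz_mull. Qed.

Lemma notdvd_vz p k x : prime p -> ~~ (PP p k.+1 %| x)%Z -> x != 0 /\ (vz p x <= k)%N.
Proof.
move=> pp h; have x0 := dvd0_neq pp h; split => //.
by have := vz_lt pp x0 h.
Qed.

Lemma p_not2 p : prime p -> p != 2%N -> ~~ (p%:Z %| 2)%Z.
Proof.
move=> pp p2; rewrite dvdzE absz_nat; apply/negP => h.
have := dvdn_leq (isT : (0 < 2)%N) h; have := prime_gt1 pp.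
move: p2 h; case: p pp => [|[|[|q]]] //.
Qed.

Lemma p_sq p x : prime p -> (p%:Z %| x ^+ 2)%Z -> (p%:Z %| x)%Z.
Proof. by move=> pp; rewrite expr2 => /(EuclidP pp) []. Qed.

Lemma p_mul p x y : prime p -> ~~ (p%:Z %| x)%Z -> ~~ (p%:Z %| y)%Z -> ~~ (p%:Z %| x * y)%Z.
Proof. by move=> pp hx hy; apply/negP => /(EuclidP pp) [] h; [move: hx|move: hy]; rewrite h. Qed.


Ltac nlia := repeat match goal with
  | H : is_true (_ %| _)%Z |- _ => clear H
  | H : is_true (~~ _) |- _ => clear H
  | H : is_true (_ && _) |- _ => clear H
  | H : is_true (prime _) |- _ => clear H
  | H : @eq int _ _ |- _ => clear H
  end; lia.

Lemma dvd_eq (d x y : int) : (d %| x)%Z -> x = y -> (d %| y)%Z.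
Proof. by move=> h <-. Qed.

Ltac dsolve := solve [ assumption | apply: rpredD; dsolve | apply: rpredB; dsolve
  | apply: dvdz_mull; dsolve | apply: dvdz_mulr; dsolve | rewrite rpredN; dsolve ].

Lemma minor_core (D A B : int) (p l : nat) (t0 t1 t2 t3 t4 : int) :
  prime p -> p != 2%N -> (p%:Z %| D)%Z -> ~~ (PP p 2 %| D)%Z -> (1 <= l)%N ->
  ~~ (PP p l.+1 %| A)%Z -> ~~ (PP p l.+1 %| B)%Z ->
  ~~ (PP p l.+1 %| A - B)%Z -> ~~ (PP p l.+1 %| Gpoly A B)%Z ->
  (PP p (8 * l + 1) %| t2 ^+ 2 - D * t3 ^+ 2 - t0 * t1)%Z ->
  (PP p (8 * l + 1) %| t2 ^+ 2 - D * t4 ^+ 2 - (t0 + A * t1) * (t0 + B * t1))%Z ->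
  ~~ [&& (p%:Z %| t0)%Z, (p%:Z %| t1)%Z, (p%:Z %| t2)%Z, (p%:Z %| t3)%Z & (p%:Z %| t4)%Z] ->
  ~~ [&& (PP p (4 * l + 1) %| 2 * t2 * (2 * t0 + (A + B - 1) * t1))%Z,
         (PP p (4 * l + 1) %| 2 * t2 * ((A + B - 1) * t0 + 2 * A * B * t1))%Z,
         (PP p (4 * l + 1) %| 2 * A * B * t1 ^+ 2 - 2 * t0 ^+ 2)%Z,
         (PP p (4 * l + 1) %| 2 * D * t1 * t4)%Z &
         (PP p (4 * l + 1) %| 2 * D * t3 * (2 * t0 + (A + B) * t1))%Z].
Proof.
move=> pp p2 hD1 hD2 l1 hA hB hAB hG h1 h2 hprim.
set K := (4 * l + 1)%N.
have p2n := p_not2 pp p2.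
have D0 : D != 0 by apply: dvd0_neq hD2.
have vD : vz p D = 1%N.
  have := vz_lt pp D0 hD2; have := @vz_ge p 1 D pp D0; rewrite PP1 => /(_ hD1); nlia.
have v2 : vz p 2 = 0%N by apply: vz0.
have n20 : (2 : int) != 0 by [].
have [A0 vA] := notdvd_vz pp hA.
have [B0 vB] := notdvd_vz pp hB.
have [AB0 vAB] := notdvd_vz pp hAB.
have [G0 vG] := notdvd_vz pp hG.
have Dsq : forall z, (PP p K %| D * z)%Z -> (PP p (8 * l + 1) %| D * z ^+ 2)%Z.
  move=> z hz; have [->|z0] := eqVneq z 0; first by rewrite expr0n mulr0 dvdz0.
  move: hz; rewrite (dvdP_vz _ pp (mulf_neq0 D0 z0)) (dvdP_vz _ pp (mulf_neq0 D0 (expf_neq0 2 z0))) !vzM ?expf_neq0 //.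
  rewrite vD /K; nlia.
apply/negP => /and5P [m02 m12 m01 m04 m03].
have hp1 : (p%:Z %| t2 ^+ 2 - D * t3 ^+ 2 - t0 * t1)%Z by rewrite -PP1; apply: dvdP_le h1; nlia.
have hp2 : (p%:Z %| t2 ^+ 2 - D * t4 ^+ 2 - (t0 + A * t1) * (t0 + B * t1))%Z
  by rewrite -PP1; apply: dvdP_le h2; nlia.
have KG : (l.+1 <= K)%N by rewrite /K; nlia.
case: (boolP (p%:Z %| t2)%Z) => ht2; last first.
  have ht0 : ~~ (p%:Z %| t0)%Z.
    apply/negP => h0; move/negP: ht2; apply; apply: p_sq => //.
    have -> : t2 ^+ 2 = (t2 ^+ 2 - D * t3 ^+ 2 - t0 * t1) + (t3 ^+ 2) * D + t1 * t0 by ring.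
    by dsolve.
  have n2t2 : ~~ (p%:Z %| t2 * 2)%Z by apply: p_mul.
  have L1 : (PP p K %| 2 * t0 + (A + B - 1) * t1)%Z.
    by apply: (cancelP pp _ n2t2); apply: (dvd_eq m02); ring.
  have L2 : (PP p K %| (A + B - 1) * t0 + 2 * A * B * t1)%Z.
    by apply: (cancelP pp _ n2t2); apply: (dvd_eq m12); ring.
  have : (PP p K %| Gpoly A B * t0)%Z.
    have -> : Gpoly A B * t0 = (A + B - 1) * ((A + B - 1) * t0 + 2 * A * B * t1)
       + (- (2 * A * B)) * (2 * t0 + (A + B - 1) * t1) by rewrite /Gpoly; ring.
    exact: dvdlin.
  move/(cancelP pp)/(_ ht0)/(dvdP_le KG); by rewrite (negbTE hG).
have hD : (p%:Z %| D * t3 ^+ 2)%Z by apply: dvdz_mulr.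
have hD' : (p%:Z %| D * t4 ^+ 2)%Z by apply: dvdz_mulr.
have ht2s : (p%:Z %| t2 ^+ 2)%Z by rewrite expr2 dvdz_mulr.
have pq1 : (p%:Z %| t0 * t1)%Z.
  have -> : t0 * t1 = t2 ^+ 2 - D * t3 ^+ 2 - (t2 ^+ 2 - D * t3 ^+ 2 - t0 * t1) by ring.
  by dsolve.
have pq2 : (p%:Z %| (t0 + A * t1) * (t0 + B * t1))%Z.
  have -> : (t0 + A * t1) * (t0 + B * t1) = t2 ^+ 2 - D * t4 ^+ 2 -
     (t2 ^+ 2 - D * t4 ^+ 2 - (t0 + A * t1) * (t0 + B * t1)) by ring.
  by dsolve.
have ht0 : (p%:Z %| t0)%Z.
  case: (EuclidP pp pq1) => // ht1.
  apply: p_sq => //.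
  have -> : t0 ^+ 2 = (t0 + A * t1) * (t0 + B * t1) - t1 * (A * t0 + B * t0 + A * B * t1) by ring.
  by dsolve.
have ht1 : ~~ (p%:Z %| t1)%Z.
  apply/negP => ht1; move/negP: hprim; apply; rewrite ht0 ht1 ht2 /=.
  have PP2 : PP p 2 = p%:Z * p%:Z by rewrite PPS PP1.
  have h1' : (PP p 2 %| t2 ^+ 2 - D * t3 ^+ 2 - t0 * t1)%Z by apply: dvdP_le h1; nlia.
  have h2' : (PP p 2 %| t2 ^+ 2 - D * t4 ^+ 2 - (t0 + A * t1) * (t0 + B * t1))%Z
    by apply: dvdP_le h2; nlia.
  have t2s : (PP p 2 %| t2 ^+ 2)%Z by rewrite PP2 expr2 dvdz_mul.
  have ht3 : (p%:Z %| t3)%Z.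
    apply/negPn/negP => ht3; move/negP: hD2; apply.
    apply: (cancelP pp (y := t3 ^+ 2)); last by rewrite expr2 p_mul.
    have -> : D * t3 ^+ 2 = t2 ^+ 2 - t0 * t1 - (t2 ^+ 2 - D * t3 ^+ 2 - t0 * t1) by ring.
    have t01 : (PP p 2 %| t0 * t1)%Z by rewrite PP2 dvdz_mul.
    by dsolve.
  have ht4 : (p%:Z %| t4)%Z.
    apply/negPn/negP => ht4; move/negP: hD2; apply.
    apply: (cancelP pp (y := t4 ^+ 2)); last by rewrite expr2 p_mul.
    have -> : D * t4 ^+ 2 = t2 ^+ 2 - (t0 + A * t1) * (t0 + B * t1) -
        (t2 ^+ 2 - D * t4 ^+ 2 - (t0 + A * t1) * (t0 + B * t1)) by ring.
    have tAB : (PP p 2 %| (t0 + A * t1) * (t0 + B * t1))%Z by rewrite PP2; apply: dvdz_mul; dsolve.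
    by dsolve.
  by rewrite ht3 ht4.
have t10 : t1 != 0 by apply: dvdp_eq0 ht1.
have vt1 : vz p t1 = 0%N by apply: vz0.
have hE : (PP p K %| A * B * t1 ^+ 2 - t0 ^+ 2)%Z.
  by apply: (cancelP pp _ p2n); apply: (dvd_eq m01); ring.
have n2t1 : ~~ (p%:Z %| 2 * t1)%Z by apply: p_mul.
have hDt4 : (PP p (8 * l + 1) %| D * t4 ^+ 2)%Z.
  by apply: Dsq; apply: (cancelP pp _ n2t1); apply: (dvd_eq m04); ring.
have hR : (PP p K %| D * t3 ^+ 2 - t0 * (2 * t0 + (A + B - 1) * t1))%Z.
  have -> : D * t3 ^+ 2 - t0 * (2 * t0 + (A + B - 1) * t1) =
    (t2 ^+ 2 - D * t4 ^+ 2 - (t0 + A * t1) * (t0 + B * t1)) + D * t4 ^+ 2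
     - (t2 ^+ 2 - D * t3 ^+ 2 - t0 * t1) + (A * B * t1 ^+ 2 - t0 ^+ 2) by ring.
  have hK1 : (PP p K %| t2 ^+ 2 - D * t3 ^+ 2 - t0 * t1)%Z by apply: dvdP_le h1; rewrite /K; nlia.
  have hK2 : (PP p K %| t2 ^+ 2 - D * t4 ^+ 2 - (t0 + A * t1) * (t0 + B * t1))%Z by apply: dvdP_le h2; rewrite /K; nlia.
  have hK4 : (PP p K %| D * t4 ^+ 2)%Z by apply: dvdP_le hDt4; rewrite /K; nlia.
  by dsolve.
have ABt0 : A * B * t1 ^+ 2 != 0 by rewrite !mulf_neq0 ?expf_neq0.
have vABt : vz p (A * B * t1 ^+ 2) = (vz p A + vz p B)%N.
  rewrite !vzM ?mulf_neq0 ?expf_neq0 // ?vt1 ?addn0 //.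
have t00 : t0 != 0.
  apply/negP => /eqP t00; move: hE; rewrite t00 expr0n subr0 dvdP_vz // vABt /K; nlia.
have vt0 : (vz p t0 <= l)%N.
  have [_ ] := vz_add pp (x := t0 ^+ 2) (y := A * B * t1 ^+ 2) (z := - (A * B * t1 ^+ 2 - t0 ^+ 2))
    (k := K) ltac:(ring) ltac:(by rewrite rpredN) ABt0 ltac:(rewrite vABt /K; nlia).
  rewrite expr2 vzM // vABt; nlia.
case: (boolP (p%:Z %| 2 * t0 + (A + B) * t1)%Z) => hX.
-
  have hY : ~~ (p%:Z %| 2 * t0 + (A + B - 1) * t1)%Z.
    apply/negP => hY; move/negP: ht1; apply.
    have -> : t1 = 2 * t0 + (A + B) * t1 - (2 * t0 + (A + B - 1) * t1) by ring.
    by dsolve.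
  have Y0 := dvdp_eq0 pp hY.
  have [Dt30 vDt3] := vz_add pp (x := D * t3 ^+ 2) (y := t0 * (2 * t0 + (A + B - 1) * t1))
    (z := D * t3 ^+ 2 - t0 * (2 * t0 + (A + B - 1) * t1)) (k := K) ltac:(ring) hR
    ltac:(by rewrite mulf_neq0) ltac:(rewrite vzM // (vz0 pp hY) /K; nlia).
  have t30 : t3 != 0 by apply: contraNneq Dt30 => ->; rewrite expr0n mulr0.
  move: vDt3; rewrite vzM ?expf_neq0 // vzM // (vz0 pp hY) vD expr2 vzM // => vt3.
  set X := 2 * t0 + (A + B) * t1 in hX m03 *.
  have nXZ : ~~ (PP p (2 * l + 1) %| X * (X - 2 * (A + B) * t1))%Z.
    apply/negP => hXZ.
    have : (PP p (2 * l + 1) %| (A - B) ^+ 2 * t1 ^+ 2)%Z.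
      have -> : (A - B) ^+ 2 * t1 ^+ 2 = (-4) * (A * B * t1 ^+ 2 - t0 ^+ 2)
         - X * (X - 2 * (A + B) * t1) by rewrite /X; ring.
      have hE' : (PP p (2 * l + 1) %| A * B * t1 ^+ 2 - t0 ^+ 2)%Z by apply: dvdP_le hE; rewrite /K; nlia.
      by dsolve.
    rewrite dvdP_vz ?mulf_neq0 ?expf_neq0 // !expr2 !vzM ?mulf_neq0 // vt1; nlia.
  have X0 : X != 0 by apply: contraNneq nXZ => ->; rewrite mul0r dvdz0.
  have vX : (vz p X <= 2 * l)%N.
    have [//|vX] := leqP (vz p X) (2 * l).
    have hX' : (PP p (2 * l + 1) %| X)%Z by rewrite dvdP_vz //; nlia.
    by rewrite -(negbTE nXZ) dvdz_mulr.
  move: m03; rewrite dvdP_vz ?mulf_neq0 // !vzM ?mulf_neq0 // v2 vD /K; nlia.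
-
  have n2X : ~~ (p%:Z %| 2 * (2 * t0 + (A + B) * t1))%Z by apply: p_mul.
  have hDt3 : (PP p (8 * l + 1) %| D * t3 ^+ 2)%Z.
    by apply: Dsq; apply: (cancelP pp _ n2X); apply: (dvd_eq m03); ring.
  have hty : (PP p K %| t0 * (2 * t0 + (A + B - 1) * t1))%Z.
    have -> : t0 * (2 * t0 + (A + B - 1) * t1) = D * t3 ^+ 2 -
       (D * t3 ^+ 2 - t0 * (2 * t0 + (A + B - 1) * t1)) by ring.
    have hD3 : (PP p K %| D * t3 ^+ 2)%Z by apply: dvdP_le hDt3; rewrite /K; nlia.
    by dsolve.
  have hY : (PP p l.+1 %| 2 * t0 + (A + B - 1) * t1)%Z.
    have [->|Y0] := eqVneq (2 * t0 + (A + B - 1) * t1) 0; first by rewrite dvdz0.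
    move: hty; rewrite !dvdP_vz ?mulf_neq0 // vzM // /K; nlia.
  have : (PP p l.+1 %| Gpoly A B * t1 ^+ 2)%Z.
    have -> : Gpoly A B * t1 ^+ 2 = (-4) * (A * B * t1 ^+ 2 - t0 ^+ 2) -
       (2 * t0 + (A + B - 1) * t1) * (2 * t0 + (A + B - 1) * t1 - 2 * (A + B - 1) * t1)
       by rewrite /Gpoly; ring.
    have hE' : (PP p l.+1 %| A * B * t1 ^+ 2 - t0 ^+ 2)%Z by apply: dvdP_le hE.
    by dsolve.
  move/(cancelP pp)/(_ ltac:(by rewrite expr2 p_mul)); by rewrite (negbTE hG).
Qed.


Definition L1 (D : int) (t h : 'I_5 -> int) : int :=
  2 * t (inord 2) * h (inord 2) - 2 * D * t (inord 3) * h (inord 3)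
  - t (inord 0) * h (inord 1) - t (inord 1) * h (inord 0).
Definition L2 (D A B : int) (t h : 'I_5 -> int) : int :=
  2 * t (inord 2) * h (inord 2) - 2 * D * t (inord 4) * h (inord 4)
  - ((t (inord 0) + A * t (inord 1)) * (h (inord 0) + B * h (inord 1))
     + (h (inord 0) + A * h (inord 1)) * (t (inord 0) + B * t (inord 1))).

Lemma Q1_add (D : int) (t h : 'I_5 -> int) : Q1 D (fun i => t i + h i) = Q1 D t + L1 D t h + Q1 D h.
Proof. rewrite /Q1 /L1; ring. Qed.
Lemma Q2_add (D A B : int) (t h : 'I_5 -> int) : Q2 D A B (fun i => t i + h i) = Q2 D A B t + L2 D A B t h + Q2 D A B h.
Proof. rewrite /Q2 /L2; ring. Qed.
Lemma Q1_scale (D s : int) (h : 'I_5 -> int) : Q1 D (fun i => s * h i) = s ^+ 2 * Q1 D h.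
Proof. rewrite /Q1; ring. Qed.
Lemma Q2_scale (D A B s : int) (h : 'I_5 -> int) : Q2 D A B (fun i => s * h i) = s ^+ 2 * Q2 D A B h.
Proof. rewrite /Q2; ring. Qed.
Lemma L1_linh (D : int) t (a b : int) (h k : 'I_5 -> int) : L1 D t (fun i => a * h i + b * k i) = a * L1 D t h + b * L1 D t k.
Proof. rewrite /L1; ring. Qed.
Lemma L2_linh (D A B : int) t (a b : int) (h k : 'I_5 -> int) :
  L2 D A B t (fun i => a * h i + b * k i) = a * L2 D A B t h + b * L2 D A B t k.
Proof. rewrite /L2; ring. Qed.
Lemma L1_lint (D : int) t (s : int) (u h : 'I_5 -> int) : L1 D (fun i => t i + s * u i) h = L1 D t h + s * L1 D u h.
Proof. rewrite /L1; ring. Qed.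
Lemma L2_lint (D A B : int) t (s : int) (u h : 'I_5 -> int) :
  L2 D A B (fun i => t i + s * u i) h = L2 D A B t h + s * L2 D A B u h.
Proof. rewrite /L2; ring. Qed.
Lemma L1_ext (D : int) (t t' h h' : 'I_5 -> int) : (forall i, t i = t' i) -> (forall i, h i = h' i) ->
  L1 D t h = L1 D t' h'.
Proof. by move=> et eh; rewrite /L1 !et !eh. Qed.
Lemma L2_ext (D A B : int) (t t' h h' : 'I_5 -> int) : (forall i, t i = t' i) -> (forall i, h i = h' i) ->
  L2 D A B t h = L2 D A B t' h'.
Proof. by move=> et eh; rewrite /L2 !et !eh. Qed.
Lemma Q1_ext (D : int) (t t' : 'I_5 -> int) : (forall i, t i = t' i) -> Q1 D t = Q1 D t'.
Proof. by move=> et; rewrite /Q1 !et. Qed.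
Lemma Q2_ext (D A B : int) (t t' : 'I_5 -> int) : (forall i, t i = t' i) -> Q2 D A B t = Q2 D A B t'.
Proof. by move=> et; rewrite /Q2 !et. Qed.

Definition delta (c : 'I_5) : 'I_5 -> int := fun i => if i == c then 1 else 0.
Definition J1 (D : int) (t : 'I_5 -> int) c := L1 D t (delta c).
Definition J2 (D A B : int) (t : 'I_5 -> int) c := L2 D A B t (delta c).
Definition minor (D A B : int) (t : 'I_5 -> int) c1 c2 :=
  J1 D t c1 * J2 D A B t c2 - J1 D t c2 * J2 D A B t c1.

Definition step (D A B : int) (p e : nat) (w : int) c1 c2 (t : 'I_5 -> int) (n : nat) : 'I_5 -> int :=
  let q1 := (Q1 D t %/ PP p n)%Z in let q2 := (Q2 D A B t %/ PP p n)%Z in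
  let a := J1 D t c1 in let b := J1 D t c2 in
  let c := J2 D A B t c1 in let d := J2 D A B t c2 in
  let x := - w * (d * q1 - b * q2) in let y := - w * (a * q2 - c * q1) in
  fun i => t i + PP p (n - e) * (x * delta c1 i + y * delta c2 i).

Lemma step_ok (D A B : int) (p e : nat) (w : int) c1 c2 (t : 'I_5 -> int) (n : nat) :
  prime p ->
  (2 * e + 1 <= n)%N ->
  (PP p n %| Q1 D t)%Z -> (PP p n %| Q2 D A B t)%Z ->
  (PP p e.+1 %| w * minor D A B t c1 c2 - PP p e)%Z ->
  [/\ (PP p n.+1 %| Q1 D (step D A B p e w c1 c2 t n))%Z,
      (PP p n.+1 %| Q2 D A B (step D A B p e w c1 c2 t n))%Z &
      forall i, (PP p (n - e) %| step D A B p e w c1 c2 t n i - t i)%Z].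
Proof.
move=> pp hn h1 h2 hw.
set q1 := (Q1 D t %/ PP p n)%Z; set q2 := (Q2 D A B t %/ PP p n)%Z.
set a := J1 D t c1; set b := J1 D t c2; set c := J2 D A B t c1; set d := J2 D A B t c2.
set x := - w * (d * q1 - b * q2); set y := - w * (a * q2 - c * q1).
set s := PP p (n - e).
have Ps : PP p n = s * PP p e by rewrite /s -PPD subnK //; lia.
have Pn1 : PP p n.+1 = s * PP p e.+1 by rewrite /s -PPD; congr PP; lia.
have ss : (PP p n.+1 %| s ^+ 2)%Z.
  rewrite /s expr2 -PPD; apply: dvdP_le (dvdzz _); lia.
have E1 : Q1 D t = q1 * PP p n by rewrite divzK.
have E2 : Q2 D A B t = q2 * PP p n by rewrite divzK.
have hm : minor D A B t c1 c2 = a * d - b * c by rewrite /minor; ring.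
rewrite -/q1 -/q2 /=.
split; last first.
  by move=> i; rewrite addrC addKr dvdz_mulr.
- rewrite (@Q2_ext D A B _ (fun i => t i + (fun i => s * (x * delta c1 i + y * delta c2 i)) i)) //.
  rewrite Q2_add Q2_scale.
  rewrite (@L2_ext D A B t t _ (fun i => (s * x) * delta c1 i + (s * y) * delta c2 i)) //;
    last by move=> i; ring.
  rewrite L2_linh -/c -/d E2 Ps.
  have -> : q2 * (s * PP p e) + (s * x * c + s * y * d) =
     s * (q2 * (PP p e - w * minor D A B t c1 c2)) by rewrite hm /x /y; ring.
  apply: rpredD; last exact: dvdz_mulr.
  rewrite Pn1 dvdz_mul2l ?PP_neq0 //.
  by rewrite dvdz_mull // -opprB rpredN.
- rewrite (@Q1_ext D _ (fun i => t i + (fun i => s * (x * delta c1 i + y * delta c2 i)) i)) //.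
  rewrite Q1_add Q1_scale.
  rewrite (@L1_ext D t t _ (fun i => (s * x) * delta c1 i + (s * y) * delta c2 i)) //;
    last by move=> i; ring.
  rewrite L1_linh -/a -/b E1 Ps.
  have -> : q1 * (s * PP p e) + (s * x * a + s * y * b) =
     s * (q1 * (PP p e - w * minor D A B t c1 c2)) by rewrite hm /x /y; ring.
  apply: rpredD; last exact: dvdz_mulr.
  rewrite Pn1 dvdz_mul2l ?PP_neq0 //.
  by rewrite dvdz_mull // -opprB rpredN.
Qed.


Fixpoint hseq (D A B : int) (p e : nat) (w : int) c1 c2 (T0 : 'I_5 -> int) (N k : nat) : 'I_5 -> int :=
  match k with
  | 0 => T0
  | k'.+1 => step D A B p e w c1 c2 (hseq D A B p e w c1 c2 T0 N k') (N + k')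
  end.

Lemma minor_cong (D A B : int) (p e : nat) c1 c2 (t T0 : 'I_5 -> int) :
  (forall i, (PP p e %| t i - T0 i)%Z) ->
  (PP p e %| minor D A B t c1 c2 - minor D A B T0 c1 c2)%Z.
Proof.
move=> ht.
pose u i := ((t i - T0 i) %/ PP p e)%Z.
have et : forall i, t i = T0 i + PP p e * u i.
  by move=> i; rewrite /u mulrC divzK // addrC subrK.
have EJ1 : forall c, J1 D t c = J1 D T0 c + PP p e * J1 D u c.
  by move=> c; rewrite /J1 (@L1_ext D t (fun i => T0 i + PP p e * u i) _ (delta c)) // L1_lint.
have EJ2 : forall c, J2 D A B t c = J2 D A B T0 c + PP p e * J2 D A B u c.
  by move=> c; rewrite /J2 (@L2_ext D A B t (fun i => T0 i + PP p e * u i) _ (delta c)) // L2_lint.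
rewrite /minor !EJ1 !EJ2.
set a1 := J1 D T0 c1; set a2 := J1 D T0 c2; set b1 := J2 D A B T0 c1; set b2 := J2 D A B T0 c2.
set u1 := J1 D u c1; set u2 := J1 D u c2; set v1 := J2 D A B u c1; set v2 := J2 D A B u c2.
set s := PP p e.
have -> : (a1 + s * u1) * (b2 + s * v2) - (a2 + s * u2) * (b1 + s * v1) - (a1 * b2 - a2 * b1)
  = s * (a1 * v2 + u1 * b2 + s * u1 * v2 - a2 * v1 - u2 * b1 - s * u2 * v1) by ring.
exact: dvdz_mulr.
Qed.

Lemma hseq_ok (D A B : int) (p e : nat) (w : int) c1 c2 (T0 : 'I_5 -> int) (N : nat) :
  prime p -> (2 * e + 1 <= N)%N ->
  (PP p N %| Q1 D T0)%Z -> (PP p N %| Q2 D A B T0)%Z ->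
  (PP p e.+1 %| w * minor D A B T0 c1 c2 - PP p e)%Z ->
  forall k, [/\ (PP p (N + k) %| Q1 D (hseq D A B p e w c1 c2 T0 N k))%Z,
     (PP p (N + k) %| Q2 D A B (hseq D A B p e w c1 c2 T0 N k))%Z,
     (forall i, (PP p e.+1 %| hseq D A B p e w c1 c2 T0 N k i - T0 i)%Z) &
     (forall i, (PP p (N + k - e) %| hseq D A B p e w c1 c2 T0 N k.+1 i
                                     - hseq D A B p e w c1 c2 T0 N k i)%Z)].
Proof.
move=> pp hN h1 h2 hw.
have hwg : forall t, (forall i, (PP p e.+1 %| t i - T0 i)%Z) ->
    (PP p e.+1 %| w * minor D A B t c1 c2 - PP p e)%Z.
  move=> t ht.
  have -> : w * minor D A B t c1 c2 - PP p e =
      w * (minor D A B t c1 c2 - minor D A B T0 c1 c2) + (w * minor D A B T0 c1 c2 - PP p e)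
      by ring.
  by rewrite rpredD // dvdz_mull // minor_cong.
have hNk : forall k, (2 * e + 1 <= N + k)%N by move=> k; apply: leq_trans hN (leq_addr _ _).
have main : forall k, [/\ (PP p (N + k) %| Q1 D (hseq D A B p e w c1 c2 T0 N k))%Z,
     (PP p (N + k) %| Q2 D A B (hseq D A B p e w c1 c2 T0 N k))%Z &
     (forall i, (PP p e.+1 %| hseq D A B p e w c1 c2 T0 N k i - T0 i)%Z)].
  elim=> [|k [ih1 ih2 ih3]]; first by rewrite addn0; split => // i; rewrite subrr dvdz0.
  set t := hseq D A B p e w c1 c2 T0 N k.
  have hw' := hwg t ih3.
  have [s1 s2 s3] := @step_ok D A B p e w c1 c2 t (N + k) pp (hNk k) ih1 ih2 hw'.
  rewrite /= -/t addnS; split => // i.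
  have -> : step D A B p e w c1 c2 t (N + k) i - T0 i =
    (step D A B p e w c1 c2 t (N + k) i - t i) + (t i - T0 i) by ring.
  rewrite rpredD //; apply: dvdP_le (s3 i); move: (hNk k); clear; lia.
move=> k; have [m1 m2 m3] := main k; split => // i.
have [s1 s2 s3] := main k.
have [q1 q2 q3] := @step_ok D A B p e w c1 c2 (hseq D A B p e w c1 c2 T0 N k) (N + k) pp (hNk k) m1 m2 (hwg _ m3).
exact: q3.
Qed.


Lemma ieq (a b : nat) : (a < 5)%N -> (b < 5)%N -> ((inord a : 'I_5) == inord b) = (a == b).
Proof. by move=> ha hb; rewrite -val_eqE /= !inordK. Qed.

Ltac mcomp := rewrite /minor /J1 /J2 /L1 /L2 /delta !ieq //=; ring.

Lemma m02E (D A B : int) (t : 'I_5 -> int) : minor D A B t (inord 0) (inord 2) =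
  2 * t (inord 2) * (2 * t (inord 0) + (A + B - 1) * t (inord 1)).
Proof. mcomp. Qed.
Lemma m12E (D A B : int) (t : 'I_5 -> int) : minor D A B t (inord 1) (inord 2) =
  2 * t (inord 2) * ((A + B - 1) * t (inord 0) + 2 * A * B * t (inord 1)).
Proof. mcomp. Qed.
Lemma m01E (D A B : int) (t : 'I_5 -> int) : minor D A B t (inord 0) (inord 1) =
  2 * A * B * t (inord 1) ^+ 2 - 2 * t (inord 0) ^+ 2.
Proof. mcomp. Qed.
Lemma m04E (D A B : int) (t : 'I_5 -> int) : minor D A B t (inord 0) (inord 4) =
  2 * D * t (inord 1) * t (inord 4).
Proof. mcomp. Qed.
Lemma m03E (D A B : int) (t : 'I_5 -> int) : minor D A B t (inord 0) (inord 3) =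
  - (2 * D * t (inord 3) * (2 * t (inord 0) + (A + B) * t (inord 1))).
Proof. mcomp. Qed.

Lemma get_w (p K : nat) (m : int) : prime p -> ~~ (PP p K %| m)%Z ->
  exists e w, (e < K)%N /\ (PP p e.+1 %| w * m - PP p e)%Z.
Proof.
move=> pp hK.
have m0 := dvd0_neq pp hK.
set e := vz p m.
have eK : (e < K)%N by apply: vz_lt.
have he : (PP p e %| m)%Z by rewrite dvdP_vz.
have he1 : ~~ (PP p e.+1 %| m)%Z by rewrite dvdP_vz // ltnn.
set w0 := (m %/ PP p e)%Z.
have mE : m = w0 * PP p e by rewrite divzK.
have nw0 : ~~ (p%:Z %| w0)%Z.
  apply: contra he1 => h; rewrite [X in (_ %| X)%Z]mE PPS; exact: dvdz_mul h (dvdzz _).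
have g1 : gcdz p%:Z w0 = 1.
  rewrite /gcdz absz_nat; apply/eqP; rewrite eqz_nat.
  by rewrite -/(coprime _ _) prime_coprime // -absz_nat -dvdzE.
have [u [v huv]] := Bezoutz p%:Z w0.
exists e, v; split => //.
have -> : v * m - PP p e = PP p e.+1 * (- u).
  rewrite mE PPS; rewrite g1 in huv.
  have -> : v * (w0 * PP p e) = PP p e * (v * w0) by ring.
  have -> : v * w0 = 1 - u * p%:Z by rewrite -huv; ring.
  ring.
exact: dvdz_mulr.
Qed.


Ltac nlia2 := repeat match goal with
  | H : is_true (_ %| _)%Z |- _ => clear H
  | H : is_true (~~ _) |- _ => clear H
  | H : is_true (_ && _) |- _ => clear H
  | H : is_true (prime _) |- _ => clear H
  | H : @eq int _ _ |- _ => clear H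
  | H : forall _, _ |- _ => clear H
  | H : exists _, _ |- _ => clear H
  end; lia.

Lemma prim5 (p : nat) (T0 : 'I_5 -> int) : (exists i, ~~ (p%:Z %| T0 i)%Z) ->
  ~~ [&& (p%:Z %| T0 (inord 0))%Z, (p%:Z %| T0 (inord 1))%Z, (p%:Z %| T0 (inord 2))%Z,
       (p%:Z %| T0 (inord 3))%Z & (p%:Z %| T0 (inord 4))%Z].
Proof.
case=> i hi; apply/negP => /and5P [h0 h1 h2 h3 h4]; move: hi.
rewrite -(inord_val i); case: i => [[|[|[|[|[|k]]]]] Hk] /=; rewrite ?h0 ?h1 ?h2 ?h3 ?h4 //.
Qed.

Lemma backward (D A B : int) (p l : nat) (T0 : 'I_5 -> int) :
  prime p -> p != 2%N -> (p%:Z %| D)%Z -> ~~ (PP p 2 %| D)%Z -> (1 <= l)%N ->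
  ~~ (PP p l.+1 %| A)%Z -> ~~ (PP p l.+1 %| B)%Z ->
  ~~ (PP p l.+1 %| A - B)%Z -> ~~ (PP p l.+1 %| Gpoly A B)%Z ->
  (PP p (8 * l + 1) %| Q1 D T0)%Z -> (PP p (8 * l + 1) %| Q2 D A B T0)%Z ->
  (exists i, ~~ (p%:Z %| T0 i)%Z) -> S_has_Qp_point p D A B.
Proof.
move=> pp p2 hD1 hD2 l1 hA hB hAB hG h1 h2 hi.
have core := minor_core pp p2 hD1 hD2 l1 hA hB hAB hG h1 h2 (prim5 hi).
have [c1 [c2 hm]] : exists c1 c2, ~~ (PP p (4 * l + 1) %| minor D A B T0 c1 c2)%Z.
  case: (boolP (PP p (4 * l + 1) %| minor D A B T0 (inord 0) (inord 2))%Z) => h02;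
    last by exists (inord 0), (inord 2).
  case: (boolP (PP p (4 * l + 1) %| minor D A B T0 (inord 1) (inord 2))%Z) => h12;
    last by exists (inord 1), (inord 2).
  case: (boolP (PP p (4 * l + 1) %| minor D A B T0 (inord 0) (inord 1))%Z) => h01;
    last by exists (inord 0), (inord 1).
  case: (boolP (PP p (4 * l + 1) %| minor D A B T0 (inord 0) (inord 4))%Z) => h04;
    last by exists (inord 0), (inord 4).
  case: (boolP (PP p (4 * l + 1) %| minor D A B T0 (inord 0) (inord 3))%Z) => h03;
    last by exists (inord 0), (inord 3).
  move: core; rewrite -(m02E D A B T0) -(m12E D A B T0) -(m01E D A B T0) -(m04E D A B T0) h02 h12 h01 h04 /=.
  by rewrite -rpredN -(m03E D A B T0) h03.
have [e [w [eK hw]]] := get_w pp hm.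
have hN : (2 * e + 1 <= 8 * l + 1)%N by nlia2.
have H := @hseq_ok D A B p e w c1 c2 T0 (8 * l + 1) pp hN h1 h2 hw.
pose N := (8 * l + 1)%N.
exists (fun i k => hseq D A B p e w c1 c2 T0 N k i); split.
- move=> i k; rewrite eqz_mod_dvd; have [_ _ _ h4] := H k.
  by apply: (dvdP_le (k := (N + k - e)%N)) (h4 i); rewrite /N; nlia2.
- case: hi => i0 hi0; exists i0 => /(_ 1%N); rewrite eqz_mod_dvd subr0 expn1 => h.
  have [_ _ h3 _] := H 1%N.
  move/negP: hi0; apply.
  have -> : T0 i0 = hseq D A B p e w c1 c2 T0 N 1 i0 - (hseq D A B p e w c1 c2 T0 N 1 i0 - T0 i0)
    by ring.
  apply: rpredB => //; rewrite -PP1; exact: dvdP_le (h3 i0).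
- move=> k; rewrite eqz_mod_dvd subr0; have [h1' _ _ _] := H k.
  by apply: (dvdP_le (k := (N + k)%N)) h1'; nlia2.
- move=> k; rewrite eqz_mod_dvd subr0; have [_ h2' _ _] := H k.
  by apply: (dvdP_le (k := (N + k)%N)) h2'; nlia2.
Qed.


Lemma coh_dvd (p : nat) (x : nat -> int) : padic_coherent p x ->
  forall m d, (PP p m %| x (m + d)%N - x m)%Z.
Proof.
move=> coh m; elim=> [|d ih]; first by rewrite addn0 subrr dvdz0.
have -> : x (m + d.+1)%N - x m = (x (m + d).+1 - x (m + d)%N) + (x (m + d)%N - x m) by rewrite addnS; ring.
apply: rpredD => //.
have := coh (m + d)%N; rewrite eqz_mod_dvd => h.
exact: (@dvdP_le p m (m + d)%N _ (leq_addr _ _) h).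
Qed.

Lemma forward (D A B : int) (p N : nat) : prime p -> (1 <= N)%N ->
  S_has_Qp_point p D A B ->
  exists u : 'I_5 -> int, [/\ (PP p N %| Q1 D u)%Z, (PP p N %| Q2 D A B u)%Z &
     exists i, ~~ (p%:Z %| u i)%Z].
Proof.
move=> pp N1 [t [coh [i1 nz] hq1 hq2]].
have [k hk] : exists k, ~ (t i1 k == 0 %[mod (p ^ k)%:Z])%Z.
  by apply: not_all_ex_not.
have ex : exists j, [exists i, ~~ (PP p j.+1 %| t i j.+1)%Z].
  case: k hk => [|j] hk; first by exfalso; apply: hk; rewrite expn0 !modz1.
  exists j; apply/existsP; exists i1; apply/negP => h; apply: hk.
  by rewrite eqz_mod_dvd subr0.
case: (ex_minnP ex) => v /existsP [i0 hi0] minv.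
have dv : forall i, (PP p v %| t i v)%Z.
  move=> i; case: v hi0 minv => [|j] hi0 minv; first by rewrite /PP expn0 dvd1z.
  have : ~~ [exists i, ~~ (PP p j.+1 %| t i j.+1)%Z].
    apply/negP => hj; have := minv j hj; rewrite ltnn.
    by [].
  by rewrite negb_exists => /forallP /(_ i); rewrite negbK.
set K := (2 * v + N)%N.
have dK : forall i, (PP p v %| t i K)%Z.
  move=> i; have := coh_dvd (coh i) v (v + N)%N.
  rewrite /K (_ : (v + (v + N) = 2 * v + N)%N); last by clia.
  move=> h; have -> : t i (2 * v + N)%N = (t i (2 * v + N)%N - t i v) + t i v by ring.
  exact: rpredD.
pose u i := (t i K %/ PP p v)%Z.
have tu : forall i, t i K = PP p v * u i by move=> i; rewrite /u mulrC divzK.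
have PK : PP p K = PP p v ^+ 2 * PP p N by rewrite /K expr2 -!PPD; congr PP; clia.
have nz2 : PP p v ^+ 2 != 0 by rewrite expf_neq0 // PP_neq0.
exists u; split.
- have := hq1 K; rewrite eqz_mod_dvd subr0 -/(PP p K) PK.
  rewrite (@Q1_ext D _ (fun i => PP p v * u i)) // Q1_scale.
  by rewrite dvdz_mul2l.
- have := hq2 K; rewrite eqz_mod_dvd subr0 -/(PP p K) PK.
  rewrite (@Q2_ext D A B _ (fun i => PP p v * u i)) // Q2_scale.
  by rewrite dvdz_mul2l.
- exists i0; apply/negP => hu.
  have h1 : (PP p v.+1 %| t i0 K)%Z by rewrite tu PPS mulrC; apply: dvdz_mul.
  have := coh_dvd (coh i0) v.+1 (v + N).-1.
  rewrite (_ : (v.+1 + (v + N).-1 = K)%N); last by rewrite /K; clia.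
  move=> h2; move/negP: hi0; apply.
  have -> : t i0 v.+1 = t i0 K - (t i0 K - t i0 v.+1) by ring.
  exact: rpredB.
Qed.


Lemma mod_dvd_iff (q M x : int) : (q %| M)%Z -> (q %| (x %% M)%Z)%Z = (q %| x)%Z.
Proof.
move=> hM.
have E : x = (x %% M)%Z + (x %/ M)%Z * M by rewrite addrC -divz_eq.
apply/idP/idP => h.
- by rewrite E; apply: rpredD => //; apply: dvdz_mull.
- have -> : (x %% M)%Z = x - (x %/ M)%Z * M by rewrite {2}E; ring.
  by apply: rpredB => //; apply: dvdz_mull.
Qed.

Lemma Q2_diff (D A B A' B' : int) (t : 'I_5 -> int) :
  Q2 D A B t - Q2 D A' B' t = (A' - A) * (t (inord 0) * t (inord 1) + B * t (inord 1) ^+ 2)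
    + (B' - B) * (t (inord 0) * t (inord 1) + A' * t (inord 1) ^+ 2).
Proof. rewrite /Q2; ring. Qed.

Lemma G_diff (A B a b M : int) :
  Gpoly (A + a * M) (B + b * M) - Gpoly A B =
  M * ((a - b) * (2 * (A - B) + (a - b) * M) - 2 * a - 2 * b).
Proof. rewrite /Gpoly; ring. Qed.

Unset Implicit Arguments.
Theorem lemma2p4 (D : int) (p l : nat) (A B : int) :
  ~ (exists r : int, D = r ^+ 2) ->
  prime p -> p != 2%N ->
  (p%:Z %| D)%Z -> ~~ ((p ^ 2)%:Z %| D)%Z ->
  (1 <= l)%N ->
  ~~ ((p ^ l.+1)%:Z %| A)%Z -> ~~ ((p ^ l.+1)%:Z %| B)%Z ->
  ~~ ((p ^ l.+1)%:Z %| A - B)%Z -> ~~ ((p ^ l.+1)%:Z %| Gpoly A B)%Z ->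
  (S_has_Qp_point p D A B <->
   in_Rl D p l (A %% (p ^ (8 * l + 1))%:Z)%Z (B %% (p ^ (8 * l + 1))%:Z)%Z).
Proof.
move=> _ pp p2 hD1 hD2 l1 hA hB hAB hG.
set M := ((p ^ (8 * l + 1))%:Z).
set A' := (A %% M)%Z; set B' := (B %% M)%Z.
have qM : (PP p l.+1 %| M)%Z.
  have lN : (l.+1 <= 8 * l + 1)%N by clia.
  exact: (@dvdP_le p l.+1 (8 * l + 1)%N M lN (dvdzz M)).
have EA : A = A' + (A %/ M)%Z * M by rewrite addrC -divz_eq.
have EB : B = B' + (B %/ M)%Z * M by rewrite addrC -divz_eq.
have MA : (M %| A' - A)%Z.
  rewrite [X in _ - X]EA; have -> : A' - (A' + (A %/ M)%Z * M) = - ((A %/ M)%Z * M) by ring.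
  by rewrite rpredN dvdz_mull.
have MB : (M %| B' - B)%Z.
  rewrite [X in _ - X]EB; have -> : B' - (B' + (B %/ M)%Z * M) = - ((B %/ M)%Z * M) by ring.
  by rewrite rpredN dvdz_mull.
have Q2E : forall t : 'I_5 -> int, (M %| Q2 D A B t - Q2 D A' B' t)%Z.
  by move=> t; rewrite Q2_diff; apply: rpredD; apply: dvdz_mulr.
have GE : (PP p l.+1 %| Gpoly A' B')%Z = (PP p l.+1 %| Gpoly A B)%Z.
  have GD := G_diff A' B' (A %/ M)%Z (B %/ M)%Z M.
  rewrite -EA -EB in GD.
  set S := M * _ in GD.
  have hS : (PP p l.+1 %| S)%Z by apply: dvdz_mulr.
  apply/idP/idP => h.
  - have -> : Gpoly A B = Gpoly A' B' + S by rewrite -GD; ring.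
    by apply: rpredD.
  - have -> : Gpoly A' B' = Gpoly A B - S by rewrite -GD; ring.
    by apply: rpredB.
split.
- move=> hS.
  have [u [h1 h2 hi]] := forward pp (eq_ind_r (fun n => (1 <= n)%N) (ltn0Sn (8 * l)) (addn1 (8 * l))) hS.
  rewrite /in_Rl; split.
  + by rewrite mod_dvd_iff.
  + by rewrite mod_dvd_iff.
  + have -> : A' - B' = (A - B) + ((A' - A) - (B' - B)) by ring.
    apply/negP => h; move/negP: hAB; apply.
    have -> : A - B = (A - B + (A' - A - (B' - B))) - ((A' - A) - (B' - B)) by ring.
    apply: rpredB => //; apply: rpredB; exact: dvdz_trans qM _.
  + by rewrite GE.
  + exists u; split; [exact: h1 | | exact: hi].
    have -> : Q2 D A' B' u = Q2 D A B u - (Q2 D A B u - Q2 D A' B' u) by ring.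
    by apply: rpredB.
- rewrite /in_Rl => -[_ _ _ _ [t [h1 h2 hi]]].
  apply: (@backward D A B p l t pp p2 hD1 hD2 l1 hA hB hAB hG h1) => //.
  have -> : Q2 D A B t = Q2 D A' B' t + (Q2 D A B t - Q2 D A' B' t) by ring.
  by apply: rpredD.
Qed.
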